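(* The constantly rebalanced portfolio strategy $\mathrm{CRP}$ and the constantly rebalanced portfolio strategy with side information $\mathrm{CRP}_{\mathrm{side}}$ (for any side-information vectors $\mathbf v_t$ and any function $\mathbf f$ as below) are universalizable.
   Context: Market with $m\ge2$ assets and return vectors $\mathbf x_t\in(0,\infty)^m$, $t\ge0$. $\mathcal W_m=\{\mathbf w\in[0,1]^m:\sum_i w_i=1\}$. $\mathrm{CRP}$ has parameter space $\mathcal W_m$ and description $\mathrm{CRP}_t(\mathbf w)=\mathbf w$. $\mathrm{CRP}_{\mathrm{side}}$: given $k\ge1$, side-information vectors $\mathbf v_t\in\mathbb R^{q}$ and a function $\mathbf f=(f_1,\dots,f_k):\mathbb R^q\to[0,1]^k$ with $\sum_j f_j\equiv1$, its parameter space is $\mathcal W_m^k$ and its description is $\mathrm{CRP}_{\mathrm{side},t}(\mathbf w_1,\dots,\mathbf w_k)=\sum_{j=1}^k f_j(\mathbf v_t)\mathbf w_j$. General notions: for a strategy $S$ with parameter space $\mathbb W$ (a finite product of simplices) and descriptions $S_t(\mathbf w)\in\mathcal W_m$, $\mathcal R_n(S(\mathbf w))=\prod_{t=0}^{n-1}S_t(\mathbf w)\cdot\mathbf x_t$ ($\mathcal R_0\equiv1$), $\mathcal L_n=\frac1n\log\mathcal R_n$, similarly for parameter-free strategies. $\mu$ is the uniform probability measure on $\mathbb W$ and $\mathcal U(S)$ has $\mathcal U_t(S)=\int_{\mathbb W}S_t\mathcal R_t\,d\mu/\int_{\mathbb W}\mathcal R_t\,d\mu$. $U$ is a universalization of $S$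 if there is $\eta_n\to0$, independent of market data, with $\mathcal L_n(U)\ge\sup_{\mathbf w}\mathcal L_n(S(\mathbf w))-\eta_n$ for all $n$ and all market data. The $\varepsilon$-modification is $\bar S_t(\mathbf w)=(1-\frac{\varepsilon}{2(t+1)^2})S_t(\mathbf w)+\frac{\varepsilon}{2m(t+1)^2}(1,\dots,1)$; $S$ is universalizable if for every $\varepsilon\in(0,1)$, $\mathcal U(\bar S)$ is a universalization of $S$. *)

(* Defs.v *)
From HB Require Import structures.
From mathcomp Require Import all_boot all_order all_algebra.
From mathcomp Require Import all_classical all_reals all_analysis.
Set Implicit Arguments. Unset Strict Implicit. Unset Printing Implicit Defensive.
Import Order.TTheory GRing.Theory Num.Theory.
Import numFieldNormedType.Exports.
Local Open Scope classical_set_scope.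
Local Open Scope ring_scope.

Section Portfolio.
Variable R : realType.

Definition simplex (m : nat) : set ('I_m -> R) :=
  [set p | (forall i, 0 <= p i <= 1) /\ \sum_(i < m) p i = 1].

Definition paramW (m k : nat) : set ('I_k -> 'I_m -> R) :=
  [set w | forall j, simplex (w j)].

(** For the nonnegative measurable
    integrands used below this is the integral w.r.t. n-dim Lebesgue
    measure on [0,1]^n (Tonelli). *)
Fixpoint cube_int (n : nat) (f : seq R -> \bar R) : \bar R :=
  match n with
  | 0 => f [::]
  | n'.+1 => (\int[@lebesgue_measure R]_(y in `[0%R, 1%R]) cube_int n' (fun s => f (y :: s)))%E
  end.

Definition simplex_embed (m : nat) (y : seq R) : 'I_m -> R :=
  fun i => if (i < m.-1)%N then nth 0 y i else 1 - \sum_(a <- y) a.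

(** Integral over W_m with respect to ((m-1)-dimensional) Lebesgue measure
    in the chart above (unnormalized uniform measure). *)
Definition simplex_int (m : nat) (g : ('I_m -> R) -> \bar R) : \bar R :=
  cube_int m.-1 (fun y => if (\sum_(a <- y) a <= 1) && all (fun a => 0 <= a) y
                          then g (@simplex_embed m y) else 0%E).

Fixpoint prod_simplex_int (m k : nat) (G : seq ('I_m -> R) -> \bar R) : \bar R :=
  match k with
  | 0 => G [::]
  | k'.+1 => @simplex_int m (fun w => @prod_simplex_int m k' (fun W => G (w :: W)))
  end.

Definition paramW_int (m k : nat) (G : ('I_k -> 'I_m -> R) -> \bar R) : \bar R :=
  @prod_simplex_int m k (fun W => G (fun j => nth (fun _ => 0) W j)).

Definition unif_int (m k : nat) (G : ('I_k -> 'I_m -> R) -> \bar R) : \bar R :=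
  (@paramW_int m k G * ((fine (@paramW_int m k (fun _ => 1%E)))^-1)%:E)%E.

(** Market data: x t i is the return of asset i at time t. *)
Definition market (m : nat) := nat -> 'I_m -> R.
Definition market_ok (m : nat) (x : market m) := forall t i, 0 < x t i.

Definition pstrategy (m : nat) := nat -> 'I_m -> R.
Definition strategy (m k : nat) := nat -> ('I_k -> 'I_m -> R) -> 'I_m -> R.

Definition dotp (m : nat) (a b : 'I_m -> R) : R := \sum_(i < m) a i * b i.

Definition wealth (m : nat) (x : market m) (b : pstrategy m) (n : nat) : R :=
  \prod_(t < n) dotp (b t) (x t).

Definition growth (m : nat) (x : market m) (b : pstrategy m) (n : nat) : R :=
  ln (wealth x b n) / n%:R.

Definition at_param (m k : nat) (S : strategy m k) (w : 'I_k -> 'I_m -> R) : pstrategy m :=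
  fun t => S t w.

Definition univ (m k : nat) (S : strategy m k) (x : market m) : pstrategy m :=
  fun t i =>
    fine (unif_int (fun w => (S t w i * wealth x (at_param S w) t)%:E)) /
    fine (unif_int (fun w => (wealth x (at_param S w) t)%:E)).

Definition is_universalization (m k : nat) (S : strategy m k)
    (U : market m -> pstrategy m) : Prop :=
  exists eta : nat -> R, eta @ \oo --> 0 /\
    forall x : market m, market_ok x -> forall n : nat, (0 < n)%N ->
      ((growth x (U x) n)%:E >=
         ereal_sup [set (growth x (at_param S w) n)%:E | w in @paramW m k]
         - (eta n)%:E)%E.

Definition eps_mod (m k : nat) (eps : R) (S : strategy m k) : strategy m k :=
  fun t w i => (1 - eps / (2 * (t.+1)%:R ^+ 2)) * S t w i
               + eps / (2 * m%:R * (t.+1)%:R ^+ 2).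

Definition universalizable (m k : nat) (S : strategy m k) : Prop :=
  forall eps : R, 0 < eps < 1 -> is_universalization S (univ (eps_mod eps S)).

(** CRP: parameter space W_m (identified with W_m^1), CRP_t(w) = w. *)
Definition CRP (m : nat) : strategy m 1 := fun t w => w ord0.

Definition CRP_side (m k q : nat) (v : nat -> 'I_q -> R)
    (f : ('I_q -> R) -> 'I_k -> R) : strategy m k :=
  fun t w i => \sum_(j < k) f (v t) j * w j i.

End Portfolio.

(* Main.v *)
Require Import Defs.
From HB Require Import structures.
From mathcomp Require Import all_boot all_order all_algebra.
From mathcomp Require Import all_classical all_reals all_analysis.
From mathcomp Require Import measurable_realfun.
From mathcomp.algebra_tactics Require Import ring lra.
Import Order.TTheory GRing.Theory Num.Theory.
Set Implicit Arguments. Unset Strict Implicit. Unset Printing Implicit Defensive.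
Local Open Scope classical_set_scope.
Local Open Scope ring_scope.

Section Core.
Variable R : realType.

Fixpoint MF (n : nat) : forall d (T : measurableType d), (T -> seq R -> R) -> Prop :=
  match n with
  | 0 => fun d T F => measurable_fun setT (fun t => F t [::])
  | n'.+1 => fun d T F => @MF n' _ (T * R)%type (fun p s => F p.1 (p.2 :: s))
  end.

Lemma MF_ext n : forall d (T : measurableType d) (F G : T -> seq R -> R),
  (forall t s, size s = n -> F t s = G t s) -> MF n G -> MF n F.
Proof.
elim: n => [|n IH] d T F G FG /=.
  by move=> mG; apply: eq_measurable_fun mG => t _; rewrite FG.
by apply: IH => p s hs; rewrite FG //= hs.
Qed.

Lemma MF_comp n : forall d (T : measurableType d) d' (T' : measurableType d')
  (F : T -> seq R -> R) (phi : T' -> T),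
  measurable_fun setT phi -> MF n F -> MF n (fun t s => F (phi t) s).
Proof.
elim: n => [|n IH] d T d' T' F phi mphi /=.
  by move=> mF; exact: measurableT_comp mF mphi.
move=> mF; apply: (IH _ _ _ _ _ (fun p : T' * R => (phi p.1, p.2))) mF.
apply: measurable_fun_pair; last exact: measurable_snd.
exact: measurableT_comp mphi measurable_fst.
Qed.

Lemma MF_cst n : forall d (T : measurableType d) (h : T -> R),
  measurable_fun setT h -> MF n (fun t (_ : seq R) => h t).
Proof.
elim: n => [|n IH] d T h mh //=.
by apply: (IH _ _ (fun p => h p.1)); exact: measurableT_comp mh measurable_fst.
Qed.

Lemma MF_add n : forall d (T : measurableType d) (F G : T -> seq R -> R),
  MF n F -> MF n G -> MF n (fun t s => F t s + G t s).
Proof.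
elim: n => [|n IH] d T F G /=; first exact: measurable_realfun.measurable_funD.
exact: IH.
Qed.

Lemma MF_mul n : forall d (T : measurableType d) (F G : T -> seq R -> R),
  MF n F -> MF n G -> MF n (fun t s => F t s * G t s).
Proof.
elim: n => [|n IH] d T F G /=; first exact: measurable_realfun.measurable_funM.
exact: IH.
Qed.

Lemma MF_map n : forall d (T : measurableType d) (F : T -> seq R -> R) (h : R -> R),
  measurable_fun setT h -> MF n F -> MF n (fun t s => h (F t s)).
Proof.
elim: n => [|n IH] d T F h mh /=.
  by move=> mF; exact: measurableT_comp mh mF.
by move=> mF; exact: IH.
Qed.

Lemma MF_nth n : forall d (T : measurableType d) i, MF n (fun (t : T) s => nth 0 s i).
Proof.
elim: n => [|n IH] d T i /=.
  by rewrite /=; under eq_fun do rewrite nth_nil; exact: measurable_cst.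
case: i => [|i].
  by apply: (MF_ext (G := fun p _ => p.2)) => //; apply: MF_cst; exact: measurable_snd.
exact: (MF_ext (G := fun p s => nth 0 s i)).
Qed.

Lemma MF_sum n d (T : measurableType d) (I : Type) (r : seq I) (P : pred I)
  (F : I -> T -> seq R -> R) :
  (forall i, MF n (F i)) -> MF n (fun t s => \sum_(i <- r | P i) F i t s).
Proof.
move=> mF; elim: r => [|a r IHr].
  by apply: (MF_ext (G := fun _ _ => 0)) => [t s _|]; [rewrite big_nil|exact/MF_cst/measurable_cst].
apply: (MF_ext (G := fun t s => (if P a then F a t s else 0) + \sum_(i <- r | P i) F i t s)).
  by move=> t s _; rewrite big_cons; case: (P a); rewrite ?add0r.
apply: MF_add => //; case: (P a) => //; exact/MF_cst/measurable_cst.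
Qed.

Lemma MF_prod n d (T : measurableType d) (I : Type) (r : seq I) (P : pred I)
  (F : I -> T -> seq R -> R) :
  (forall i, MF n (F i)) -> MF n (fun t s => \prod_(i <- r | P i) F i t s).
Proof.
move=> mF; elim: r => [|a r IHr].
  by apply: (MF_ext (G := fun _ _ => 1)) => [t s _|]; [rewrite big_nil|exact/MF_cst/measurable_cst].
apply: (MF_ext (G := fun t s => (if P a then F a t s else 1) * \prod_(i <- r | P i) F i t s)).
  by move=> t s _; rewrite big_cons; case: (P a); rewrite ?mul1r.
apply: MF_mul => //; case: (P a) => //; exact/MF_cst/measurable_cst.
Qed.

Local Open Scope ereal_scope.

Lemma cube_ge0 n : forall (F : seq R -> \bar R), (forall s, 0 <= F s) -> 0 <= cube_int n F.
Proof.
elim: n => [|n IH] F F0 //=.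
by apply: integral_ge0 => y _; apply: IH.
Qed.

Lemma cube_meas n : forall d (T : measurableType d) (F : T -> seq R -> R),
  MF n F -> (forall t s, (0 <= F t s)%R) ->
  measurable_fun setT ((fun t => cube_int n (fun s => (F t s)%:E)) : T -> \bar R).
Proof.
elim: n => [|n IH] d T F mF F0 /=.
  exact/measurable_EFinP.
have mI := IH _ _ (fun p s => F p.1 (p.2 :: s)) mF (fun p s => F0 _ _).
pose g (p : T * R) := (\1_(`[0%R, 1%R]) p.2)%:E * cube_int n (fun s => (F p.1 (p.2 :: s))%:E).
have mg : measurable_fun setT g.
  apply: emeasurable_funM => //; apply/measurable_EFinP.
  by apply: measurableT_comp (measurable_indic _) measurable_snd.
have g0 : forall p, 0 <= g p.
  move=> p; apply: mule_ge0; first by rewrite lee_fin.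
  by apply: cube_ge0 => s; rewrite lee_fin.
have := @measurable_fun_fubini_tonelli_F _ _ T (measurableTypeR R) R (@lebesgue_measure R) g mg g0.
apply: eq_measurable_fun => t _; rewrite /fubini_F [RHS]integral_mkcond.
apply: eq_integral => y _; rewrite /g /patch /= indicE.
by case: (y \in _) => /=; rewrite ?mul1e ?mul0e.
Qed.

End Core.

Section Core2.
Variable R : realType.
Local Open Scope ereal_scope.

Lemma cube_meas_sec n d (T : measurableType d) (F : T -> seq R -> R) t :
  MF n.+1 F -> (forall t s, (0 <= F t s)%R) ->
  measurable_fun (setT : set (measurableTypeR R))
    ((fun y => cube_int n (fun s => (F t (y :: s))%:E)) : _ -> \bar R).
Proof.
move=> mF F0.
have := @cube_meas R n _ R (fun y s => F t (y :: s))
  (@MF_comp R n _ _ _ _ (fun p s => F p.1 (p.2 :: s)) (pair t) (pair1_measurable t) mF)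
  (fun _ _ => F0 _ _).
by [].
Qed.

Lemma cube_add n : forall d (T : measurableType d) (F G : T -> seq R -> R) t,
  MF n F -> MF n G -> (forall t s, (0 <= F t s)%R) -> (forall t s, (0 <= G t s)%R) ->
  cube_int n (fun s => (F t s + G t s)%:E) =
  cube_int n (fun s => (F t s)%:E) + cube_int n (fun s => (G t s)%:E).
Proof.
elim: n => [|n IH] d T F G t mF mG F0 G0 /=; first by rewrite EFinD.
transitivity (\int[@lebesgue_measure R]_(y in `[0%R, 1%R])
  (cube_int n (fun s => (F t (y :: s))%:E) + cube_int n (fun s => (G t (y :: s))%:E))).
  apply: eq_integral => y _.
  exact: (IH _ _ (fun p s => F p.1 (p.2 :: s)) (fun p s => G p.1 (p.2 :: s)) (t, y)
     mF mG (fun _ _ => F0 _ _) (fun _ _ => G0 _ _)).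
apply: ge0_integralD => //.
- by move=> y _; apply: cube_ge0 => s; rewrite lee_fin.
- by apply: (measurable_funS measurableT) => //; exact: cube_meas_sec.
- by move=> y _; apply: cube_ge0 => s; rewrite lee_fin.
- by apply: (measurable_funS measurableT) => //; exact: cube_meas_sec.
Qed.

Lemma cube_scale n : forall d (T : measurableType d) (F : T -> seq R -> R) t (c : R),
  (0 <= c)%R -> MF n F -> (forall t s, (0 <= F t s)%R) ->
  cube_int n (fun s => (c * F t s)%:E) = c%:E * cube_int n (fun s => (F t s)%:E).
Proof.
elim: n => [|n IH] d T F t c c0 mF F0 /=; first by rewrite EFinM.
transitivity (\int[@lebesgue_measure R]_(y in `[0%R, 1%R])
  (c%:E * cube_int n (fun s => (F t (y :: s))%:E))).
  apply: eq_integral => y _.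
  exact: (IH _ _ (fun p s => F p.1 (p.2 :: s)) (t, y) c c0 mF (fun _ _ => F0 _ _)).
apply: ge0_integralZl_EFin => //.
- by move=> y _; apply: cube_ge0 => s; rewrite lee_fin.
- by apply: (measurable_funS measurableT) => //; exact: cube_meas_sec.
Qed.

Lemma cube_le n : forall d (T : measurableType d) (F G : T -> seq R -> R) t,
  MF n F -> MF n G -> (forall t s, (0 <= F t s)%R) -> (forall t s, (0 <= G t s)%R) ->
  (forall s, size s = n -> (F t s <= G t s)%R) ->
  cube_int n (fun s => (F t s)%:E) <= cube_int n (fun s => (G t s)%:E).
Proof.
elim: n => [|n IH] d T F G t mF mG F0 G0 FG /=; first by rewrite lee_fin FG.
apply: ge0_le_integral => //.
- by move=> y _; apply: cube_ge0 => s; rewrite lee_fin.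
- by apply: (measurable_funS measurableT) => //; exact: cube_meas_sec.
- by apply: (measurable_funS measurableT) => //; exact: cube_meas_sec.
- move=> y _.
  apply: (IH _ _ (fun p s => F p.1 (p.2 :: s)) (fun p s => G p.1 (p.2 :: s)) (t, y)
     mF mG (fun _ _ => F0 _ _) (fun _ _ => G0 _ _)).
  by move=> s hs; apply: FG => /=; rewrite hs.
Qed.

Lemma leb01 : (@lebesgue_measure R `[0%R, 1%R]) = 1.
Proof. by rewrite lebesgue_measure_itv /= lte_fin ltr01 oppr0 adde0. Qed.

Lemma cube_cst n (c : R) : cube_int n (fun _ => c%:E) = c%:E.
Proof.
elim: n => [|n IH] //=.
under eq_integral do rewrite IH.
by rewrite integral_cst //= leb01 mule1.
Qed.

Lemma cube_box n : forall d (T : measurableType d) (F : T -> seq R -> R) t (a b : nat -> R) (c : R),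
  MF n F -> (forall t s, (0 <= F t s)%R) -> (0 <= c)%R ->
  (forall i, (0 <= a i)%R /\ (a i <= b i)%R /\ (b i <= 1)%R) ->
  (forall s, size s = n -> (forall i, (i < n)%N -> (a i <= nth 0%R s i)%R /\ (nth 0%R s i <= b i)%R) ->
     (c <= F t s)%R) ->
  ((c * \prod_(i < n) (b i - a i))%:E <= cube_int n (fun s => (F t s)%:E)).
Proof.
elim: n => [|n IH] d T F t a b c mF F0 c0 hab hF /=.
  by rewrite big_ord0 mulr1 lee_fin; apply: hF.
set K := (c * \prod_(i < n) (b i.+1 - a i.+1))%R.
have K0 : (0 <= K)%R.
  rewrite /K mulr_ge0 // prodr_ge0 // => i _.
  by have [_ [h _]] := hab i.+1; rewrite subr_ge0.
have [ha0 [hab0 hb0]] := hab 0%N.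
have hle : forall y : R,
    (K * \1_(`[a 0%N, b 0%N]) y)%:E <= cube_int n (fun s => (F t (y :: s))%:E).
  move=> y; rewrite indicE.
  case: (boolP (y \in _)) => hy; last first.
    by rewrite mulr0; apply: cube_ge0 => s; rewrite lee_fin.
  rewrite mulr1.
  apply: (IH _ _ (fun p s => F p.1 (p.2 :: s)) (t, y) (fun i => a i.+1) (fun i => b i.+1) c
     mF (fun _ _ => F0 _ _) c0 (fun i => hab i.+1)).
  move=> s hs hi /=; apply: hF => /=; first by rewrite hs.
  case=> [_|i]; last by move=> /hi.
  by move: hy; rewrite inE /= in_itv /= => /andP[].
have H := @ge0_le_integral _ (measurableTypeR R) R (@lebesgue_measure R) `[0%R,1%R] (measurable_itv _) (fun y => (K * \1_(`[a 0%N, b 0%N]) y)%:E) (fun y => cube_int n (fun s => (F t (y :: s))%:E)).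
apply: le_trans; last first.
  apply: H => //.
  - by move=> y _; rewrite lee_fin mulr_ge0.
  - apply/measurable_EFinP; apply: measurable_realfun.measurable_funM; first exact: measurable_cst.
    exact: measurable_indic.
  - by apply: (measurable_funS measurableT) => //; exact: cube_meas_sec.
under eq_integral do rewrite EFinM.
rewrite ge0_integralZl_EFin //; last first.
  exact/measurable_EFinP/measurable_indic.
rewrite integral_indic // setIidl; last first.
  move=> y /=; rewrite !in_itv /= => /andP[h1 h2].
  by rewrite (le_trans ha0 h1) (le_trans h2 hb0).
have := @lebesgue_measure_itv R `[a 0%N, b 0%N]; rewrite /= => ->.
rewrite big_ord_recl /= /K.
have -> : (\prod_(i < n) (b (bump 0 i) - a (bump 0 i)) = \prod_(i < n) (b i.+1 - a i.+1))%R.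
  by apply: eq_bigr => i _; rewrite /bump leq0n add1n.
case: ifP => hlt.
  by rewrite -EFinD -EFinM lee_fin [in X in (_ <= X)%R]mulrC mulrCA.
have -> : b 0%N = a 0%N.
  apply/eqP; rewrite eq_le hab0 andbT leNgt -lte_fin hlt.
  by [].
by rewrite subrr mul0r mulr0 mule0.
Qed.

End Core2.

Section Core3.
Variable R : realType.
Local Open Scope ereal_scope.

Lemma cube_sum n d (T : measurableType d) (I : Type) (r : seq I) (c : I -> R)
  (F : I -> T -> seq R -> R) t :
  (forall i, (0 <= c i)%R) -> (forall i, MF n (F i)) -> (forall i t s, (0 <= F i t s)%R) ->
  cube_int n (fun s => (\sum_(i <- r) c i * F i t s)%:E) =
  \sum_(i <- r) (c i)%:E * cube_int n (fun s => (F i t s)%:E).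
Proof.
move=> c0 mF F0; elim: r => [|a r IHr].
  by rewrite big_nil; under [X in cube_int _ X]funext do rewrite big_nil; exact: cube_cst.
rewrite big_cons -IHr -(cube_scale (F := F a) t (c0 a) (mF a) (F0 a)).
rewrite -(cube_add (F := fun t s => (c a * F a t s)%R) (G := fun t s => (\sum_(i <- r) c i * F i t s)%R)).
- by congr cube_int; apply: funext => s; rewrite big_cons.
- by apply: MF_mul => //; exact/MF_cst/measurable_cst.
- by apply: MF_sum => i; apply: MF_mul => //; exact/MF_cst/measurable_cst.
- by move=> ? ?; rewrite mulr_ge0.
- by move=> ? ?; apply: sumr_ge0 => i _; rewrite mulr_ge0.
Qed.

Lemma cube_cat a : forall b (F : seq R -> \bar R),
  cube_int (a + b) F = cube_int a (fun s => cube_int b (fun s' => F (s ++ s'))).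
Proof.
elim: a => [|a IH] b F //=.
by apply: eq_integral => y _; exact: (IH b (fun s => F (y :: s))).
Qed.

Lemma cube_ext n : forall (F G : seq R -> \bar R),
  (forall s, size s = n -> F s = G s) -> cube_int n F = cube_int n G.
Proof.
elim: n => [|n IH] F G FG /=; first exact: FG.
apply: eq_integral => y _; apply: IH => s hs; apply: FG => /=; by rewrite hs.
Qed.

Lemma cube_if n (c : bool) (F : seq R -> \bar R) :
  cube_int n (fun s => if c then F s else 0) = if c then cube_int n F else 0.
Proof. by case: c => //; exact: (cube_cst n 0%R). Qed.

End Core3.

Section Flat.
Variable R : realType.
Variable m' : nat.
Local Notation m := m'.+2.
Local Notation d := m'.+1.

Definition cnd (y : seq R) : bool := (\sum_(a <- y) a <= 1) && all (fun a => 0 <= a) y.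

Fixpoint Ws (k : nat) (s : seq R) : seq ('I_m -> R) :=
  match k with 0 => [::] | k'.+1 => @simplex_embed R m (take d s) :: Ws k' (drop d s) end.

Fixpoint Cs (k : nat) (s : seq R) : bool :=
  match k with 0 => true | k'.+1 => cnd (take d s) && Cs k' (drop d s) end.

Lemma psiS k (G : seq ('I_m -> R) -> \bar R) :
  @prod_simplex_int R m k.+1 G = simplex_int (fun w => @prod_simplex_int R m k (fun W => G (w :: W))).
Proof. by []. Qed.

Lemma flat k : forall (G : seq ('I_m -> R) -> \bar R),
  @prod_simplex_int R m k G = cube_int (k * d) (fun s => if Cs k s then G (Ws k s) else 0%E).
Proof.
elim: k => [|k IH] G; first by [].
rewrite mulSn cube_cat (psiS k G) /simplex_int.
apply: cube_ext => y hy.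
rewrite IH -cube_if.
apply: cube_ext => s hs.
by rewrite /= take_size_cat // drop_size_cat // /cnd; case: (_ && _).
Qed.

Lemma size_Ws k : forall s, size (Ws k s) = k.
Proof. by elim: k => [|k IH] s //=; rewrite IH. Qed.

Lemma sum_nth_pad (y : seq R) : forall n, (size y <= n)%N ->
  \sum_(i < n) nth 0 y i = \sum_(a <- y) a.
Proof.
elim: y => [|a y IH] n hn.
  by rewrite big_nil big1 // => i _; rewrite nth_nil.
case: n hn => [//|n] /= hn.
by rewrite big_ord_recl big_cons /= IH.
Qed.

Lemma sum_embed (y : seq R) : (size y <= d)%N ->
  \sum_(i < m) @simplex_embed R m y i = 1.
Proof.
move=> hy; rewrite big_ord_recr /= /simplex_embed /= ltnn.
rewrite (eq_bigr (fun i : 'I_d => nth 0 y i)); last first.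
  by move=> i _; rewrite /= ltn_ord.
by rewrite sum_nth_pad // addrC subrK.
Qed.

Lemma embed_ge0 (y : seq R) i : cnd y -> 0 <= @simplex_embed R m y i.
Proof.
case/andP => hs /allP ha; rewrite /simplex_embed /=.
case: ifP => _; last by rewrite subr_ge0.
have [hi|hi] := ltnP i (size y); first by apply: ha; exact: mem_nth.
by rewrite nth_default.
Qed.

Lemma embed_simplex (y : seq R) : cnd y -> (size y <= d)%N -> simplex (@simplex_embed R m y).
Proof.
move=> hc hy; split; last exact: sum_embed.
move=> i; rewrite embed_ge0 //=.
rewrite -(sum_embed hy) (bigD1 i) //= lerDl.
by apply: sumr_ge0 => j _; exact: embed_ge0.
Qed.

Lemma Ws_simplex k : forall s, Cs k s -> forall j, (j < k)%N ->
  simplex (nth (fun _ => 0) (Ws k s) j).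
Proof.
elim: k => [|k IH] s //= /andP[hc hC] [|j] hj /=.
  by apply: embed_simplex => //; rewrite size_take; case: ifP => // /negbT; rewrite -leqNgt.
exact: IH.
Qed.

Lemma Ws_nth k : forall s j (i : 'I_m), size s = (k * d)%N -> (j < k)%N ->
  nth (fun _ => 0) (Ws k s) j i =
  if (i < d)%N then nth 0 s (j * d + i) else 1 - \sum_(i' < d) nth 0 s (j * d + i').
Proof.
elim: k => [|k IH] s j i hs hj //.
move: hs; rewrite mulSn => hs.
case: j hj => [|j] hj /=.
  rewrite /simplex_embed /= mul0n add0n.
  case: ifP => hi; first by rewrite nth_take.
  rewrite -(@sum_nth_pad (take d s) d); last by rewrite size_take; case: ifP => // /negbT; rewrite -leqNgt.
  by congr (_ - _); apply: eq_bigr => i' _; rewrite nth_take.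
rewrite IH //; last by rewrite size_drop hs addKn.
rewrite !nth_drop mulSn.
case: ifP => _; first by rewrite addnA.
by congr (_ - _); apply: eq_bigr => i' _; rewrite nth_drop addnA.
Qed.

Definition cndj (s : seq R) (j : nat) : bool :=
  (\sum_(i < d) nth 0 s (j * d + i) <= 1) && [forall i : 'I_d, 0 <= nth 0 s (j * d + i)].

Lemma cnd_take (s : seq R) : (d <= size s)%N -> cnd (take d s) = cndj s 0.
Proof.
move=> hs; rewrite /cnd /cndj.
rewrite -(@sum_nth_pad (take d s) d); last by rewrite size_take; case: ifP => // /negbT; rewrite -leqNgt.
rewrite (eq_bigr (fun i : 'I_d => nth 0 s (0 * d + i))); last by move=> i _; rewrite nth_take.
congr andb; apply/idP/idP.
  move=> /(all_nthP 0) H; apply/forallP => i; rewrite mul0n add0n -(@nth_take d _ 0 i (ltn_ord i) s).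
  by apply: H; rewrite size_takel.
move=> /forallP H; apply/(all_nthP 0) => i; rewrite size_takel // => hi.
by rewrite nth_take //; have := H (Ordinal hi); rewrite mul0n add0n.
Qed.

Lemma Cs_iff k : forall s, size s = (k * d)%N ->
  Cs k s = true <-> (forall j, (j < k)%N -> cndj s j).
Proof.
elim: k => [|k IH] s hs //=.
move: hs; rewrite mulSn => hs.
rewrite cnd_take ?hs ?leq_addr //.
have hD : size (drop d s) = (k * d)%N by rewrite size_drop hs addKn.
have eD : forall j, cndj (drop d s) j = cndj s j.+1.
  move=> j; rewrite /cndj mulSn.
  by congr andb; [congr (_ <= _); apply: eq_bigr => i _ | apply: eq_forallb => i];
     rewrite nth_drop addnA.
split.
  case/andP => h0 /(IH _ hD) H [|j] hj //; rewrite -eD; exact: H.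
move=> H; rewrite H //=; apply/(IH _ hD) => j hj; rewrite eD; exact: H.
Qed.

End Flat.

Section Psi.
Variable R : realType.
Variables m' k : nat.
Local Notation m := m'.+2.
Local Notation d := m'.+1.

Definition goodh (h : ('I_k -> 'I_m -> R) -> R) : Prop :=
  forall n dd (T : measurableType dd) (w : T -> seq R -> 'I_k -> 'I_m -> R),
    (forall j i, MF n (fun t s => w t s j i)) -> MF n (fun t s => h (w t s)).

Lemma goodh_coord j i : goodh (fun w => w j i).
Proof. by move=> n dd T w H; exact: H. Qed.

Lemma goodh_cst c : goodh (fun _ => c).
Proof. by move=> n dd T w H; exact/MF_cst/measurable_cst. Qed.

Lemma goodh_add h1 h2 : goodh h1 -> goodh h2 -> goodh (fun w => h1 w + h2 w).
Proof. by move=> g1 g2 n dd T w H; apply: MF_add; [exact: g1|exact: g2]. Qed.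

Lemma goodh_mul h1 h2 : goodh h1 -> goodh h2 -> goodh (fun w => h1 w * h2 w).
Proof. by move=> g1 g2 n dd T w H; apply: MF_mul; [exact: g1|exact: g2]. Qed.

Lemma goodh_sum (I : Type) (r : seq I) (P : pred I) (h : I -> ('I_k -> 'I_m -> R) -> R) :
  (forall i, goodh (h i)) -> goodh (fun w => \sum_(i <- r | P i) h i w).
Proof. by move=> g n dd T w H; apply: MF_sum => i; exact: g. Qed.

Lemma goodh_prod (I : Type) (r : seq I) (P : pred I) (h : I -> ('I_k -> 'I_m -> R) -> R) :
  (forall i, goodh (h i)) -> goodh (fun w => \prod_(i <- r | P i) h i w).
Proof. by move=> g n dd T w H; apply: MF_prod => i; exact: g. Qed.

Definition I1 (x : R) : R := if x <= 1 then 1 else 0.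
Definition I0 (x : R) : R := if 0 <= x then 1 else 0.

Lemma mI1 : measurable_fun setT I1.
Proof.
apply: (eq_measurable_fun (\1_(`]-oo, 1%R]) : R -> R)); last exact: measurable_indic.
by move=> x _; rewrite indicE /I1 mem_setE in_itv /=; case: (x <= 1).
Qed.

Lemma mI0 : measurable_fun setT I0.
Proof.
apply: (eq_measurable_fun (\1_(`[0%R, +oo[) : R -> R)); last exact: measurable_indic.
by move=> x _; rewrite indicE /I0 mem_setE in_itv /= andbT; case: (0 <= x).
Qed.

Definition wexp (s : seq R) : 'I_k -> 'I_m -> R := fun j i =>
  if (i < d)%N then nth 0 s (j * d + i) else 1 - \sum_(i' < d) nth 0 s (j * d + i').

Definition Ind (s : seq R) : R :=
  \prod_(j < k) (I1 (\sum_(i < d) nth 0 s (j * d + i)) * \prod_(i < d) I0 (nth 0 s (j * d + i))).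

Definition wf (s : seq R) : 'I_k -> 'I_m -> R := fun j => nth (fun _ => 0) (Ws m' k s) j.

Definition Psi (h : ('I_k -> 'I_m -> R) -> R) (s : seq R) : R :=
  if Cs m' k s then h (wf s) else 0.

Lemma wf_wexp s : size s = (k * d)%N -> wf s = wexp s.
Proof. by move=> hs; apply/funext => j; apply/funext => i; rewrite /wf Ws_nth. Qed.

Lemma Ind_Cs s : size s = (k * d)%N -> Ind s = if Cs m' k s then 1 else 0.
Proof.
move=> hs; case: ifP => hC.
  have H := (Cs_iff hs).1 hC.
  rewrite /Ind big1 // => j _; have := H j (ltn_ord j); case/andP => h1 /forallP h0.
  rewrite /I1 h1 mul1r big1 // => i _; by rewrite /I0 h0.
have [j hj] : exists j : 'I_k, ~~ cndj m' s j.
  apply/existsP; apply: contraFT hC; rewrite negb_exists => /forallP H.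
  apply/(Cs_iff hs) => j hj; have := H (Ordinal hj); by rewrite negbK.
rewrite /Ind (bigD1 j) //= /cndj in hj *.
case/nandP: hj => [h1|/forallPn [i hi]].
  by rewrite /I1 (negbTE h1) !mul0r.
by rewrite /I0 [\prod_(i0 < d) _](bigD1 i) //= (negbTE hi) mul0r mulr0 mul0r.
Qed.

Lemma MF_wexp n dd (T : measurableType dd) j i :
  MF n (fun (t : T) s => wexp s j i).
Proof.
have [hi|hi] := boolP (i < d)%N.
  apply: (MF_ext (G := fun _ s => nth 0 s (j * d + i))); first by move=> t s _; rewrite /wexp hi.
  exact: MF_nth.
apply: (MF_ext (G := fun _ s => 1 - \sum_(i' < d) nth 0 s (j * d + i'))).
  by move=> t s _; rewrite /wexp (negbTE hi).
apply: MF_add; first exact/MF_cst/measurable_cst.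
apply: (@MF_map R n dd T _ (fun x => - x)); first exact: oppr_measurable.
by apply: MF_sum => i'; exact: MF_nth.
Qed.

Lemma MF_Ind n dd (T : measurableType dd) : MF n (fun (t : T) s => Ind s).
Proof.
apply: MF_prod => j; apply: MF_mul.
  by apply: MF_map; [exact: mI1|apply: MF_sum => i; exact: MF_nth].
by apply: MF_prod => i; apply: MF_map; [exact: mI0|exact: MF_nth].
Qed.

Lemma MF_Psi h : goodh h -> MF (k * d) (fun (_ : unit) s => Psi h s).
Proof.
move=> gh.
apply: (MF_ext (G := fun _ s => Ind s * h (wexp s))).
  move=> _ s hs; rewrite Ind_Cs // /Psi wf_wexp //.
  by case: ifP; rewrite ?mul1r ?mul0r.
apply: MF_mul; first exact: MF_Ind.
by apply: gh => j i; exact: MF_wexp.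
Qed.

Lemma Psi_ge0 h : (forall w, (forall j i, 0 <= w j i) -> 0 <= h w) -> forall s, 0 <= Psi h s.
Proof.
move=> h0 s; rewrite /Psi; case: ifP => // hC; apply: h0 => j i.
by case: (Ws_simplex hC (ltn_ord j)) => /(_ i) /andP[].
Qed.

Lemma paramW_Psi (h : ('I_k -> 'I_m -> R) -> R) :
  @paramW_int R m k (fun w => (h w)%:E) = cube_int (k * d) (fun s => (Psi h s)%:E).
Proof.
rewrite /paramW_int flat; apply: cube_ext => s _.
by rewrite /Psi; case: ifP.
Qed.

End Psi.

Section Box.
Variable R : realType.
Variables m' k : nat.
Local Notation m := m'.+2.
Local Notation d := m'.+1.

Variable ws : 'I_k -> 'I_m -> R.
Hypothesis hws : forall j, @simplex R m (ws j).

Definition wsn (j i : nat) : R :=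
  match (insub j : option 'I_k), (insub i : option 'I_m) with
  | Some j', Some i' => ws j' i' | _, _ => 0 end.

Lemma wsnE (j : 'I_k) (i : 'I_m) : wsn j i = ws j i.
Proof. by rewrite /wsn !valK. Qed.

Lemma wsn_ge0 j i : 0 <= wsn j i.
Proof.
rewrite /wsn; case: (insub j) => // j'; case: (insub i) => // i'.
by have [/(_ i') /andP[]] := hws j'.
Qed.

Lemma wsn_le1 j i : wsn j i <= 1.
Proof.
rewrite /wsn; case: (insub j) => // j'; case: (insub i) => // i'.
by have [/(_ i') /andP[]] := hws j'.
Qed.

Lemma sum_ws (j : 'I_k) : \sum_(i < d) ws j (widen_ord (leqnSn d) i) + ws j ord_max = 1.
Proof. by have [_ <-] := hws j; rewrite [RHS]big_ord_recr. Qed.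

Lemma sum_ws_le1 (j : 'I_k) : \sum_(i < d) ws j (widen_ord (leqnSn d) i) <= 1.
Proof.
rewrite -(sum_ws j) lerDl.
by have [/(_ ord_max) /andP[]] := hws j.
Qed.

Lemma ord_lt (i : 'I_m) (hi : (i < d)%N) : i = widen_ord (leqnSn d) (Ordinal hi).
Proof. exact: val_inj. Qed.

Lemma ord_ge (i : 'I_m) : ~~ (i < d)%N -> i = ord_max.
Proof.
move=> hi; apply: val_inj => /=; apply/eqP; rewrite eqn_leq -ltnS ltn_ord /=.
by rewrite leqNgt.
Qed.

Lemma subr_ge0_aux (x y : R) : x <= y -> 0 <= y - x.
Proof. by rewrite subr_ge0. Qed.

Lemma Psi_box h (gh : goodh h) (h0 : forall w, (forall j i, 0 <= w j i) -> 0 <= h w)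
  (al c : R) : 0 < al <= 1 -> 0 <= c ->
  (forall w, (forall j i, (1 - al) * ws j i <= w j i) -> c <= h w) ->
  ((c * (al / d%:R) ^+ (k * d))%:E <= cube_int (k * d) (fun s => (Psi h s)%:E))%E.
Proof.
move=> /andP[al0 al1] c0 hc.
pose a := fun idx : nat => (1 - al) * wsn (idx %/ d) (idx %% d).
pose b := fun idx : nat => a idx + al / d%:R.
have dpos : 0 < d%:R :> R by rewrite ltr0n.
have hd : al / d%:R <= al.
  have hd1 : 1 <= d%:R :> R by rewrite ler1n.
  rewrite ler_pdivrMr //; nra.
have hd0 : 0 <= al / d%:R by rewrite divr_ge0 ?ltW.
have Hab : forall i, 0 <= a i /\ a i <= b i /\ b i <= 1.
  move=> i; have := wsn_ge0 (i %/ d) (i %% d); have := wsn_le1 (i %/ d) (i %% d).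
  rewrite /b /a => w1 w0; split; first by rewrite mulr_ge0 // subr_ge0.
  split; first by rewrite lerDl.
  have := mulr_ge0 (subr_ge0_aux al1) (subr_ge0_aux w1).
  move: (wsn _ _) (al / d%:R) w1 w0 hd hd0 => w x *; nra.
have aE : forall (j : 'I_k) (i : 'I_d), a (j * d + i)%N = (1 - al) * ws j (widen_ord (leqnSn d) i).
  move=> j i; rewrite /a divnMDl // divn_small // addn0 modnMDl modn_small //.
  have -> : (i : nat) = widen_ord (leqnSn d) i by [].
  by rewrite wsnE.
have Hbox : forall s, size s = (k * d)%N ->
    (forall i, (i < k * d)%N -> a i <= nth 0 s i /\ nth 0 s i <= b i) -> c <= Psi h s.
  move=> s hs hb.
  have hji : forall (j : 'I_k) (i : 'I_d), (j * d + i < k * d)%N.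
    move=> j i; apply: (@leq_trans (j * d + d)); first by rewrite ltn_add2l.
    by rewrite -mulSnr leq_mul2r ltn_ord orbT.
  have hb1 : forall (j : 'I_k) (i : 'I_d),
      (1 - al) * ws j (widen_ord (leqnSn d) i) <= nth 0 s (j * d + i) /\
      nth 0 s (j * d + i) <= (1 - al) * ws j (widen_ord (leqnSn d) i) + al / d%:R.
    by move=> j i; have := hb _ (hji j i); rewrite /b aE.
  have hsum : forall j : 'I_k, \sum_(i < d) nth 0 s (j * d + i) <=
      (1 - al) * \sum_(i < d) ws j (widen_ord (leqnSn d) i) + al.
    move=> j; apply: (@le_trans _ _ (\sum_(i < d) ((1 - al) * ws j (widen_ord (leqnSn d) i) + al / d%:R))).
      by apply: ler_sum => i _; case: (hb1 j i).
    rewrite big_split /= -mulr_sumr sumr_const card_ord.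
    by rewrite -[al / _ *+ _]mulr_natr mulfVK // gt_eqF.
  have hC : Cs m' k s.
    apply/(Cs_iff hs) => j hj; rewrite /cndj; apply/andP; split.
      apply: le_trans (hsum (Ordinal hj)) _.
      have := sum_ws_le1 (Ordinal hj); nra.
    apply/forallP => i; case: (hb1 (Ordinal hj) i) => + _; apply: le_trans.
    rewrite mulr_ge0 ?subr_ge0 //; by have [/(_ (widen_ord (leqnSn d) i)) /andP[]] := hws (Ordinal hj).
  rewrite /Psi hC wf_wexp //; apply: hc => j i.
  rewrite /wexp; case: ifP => hi.
    by rewrite {1}(ord_lt hi); case: (hb1 j (Ordinal hi)).
  rewrite (ord_ge (negbT hi)).
  have := hsum j; have := sum_ws j; nra.
have := @cube_box R (k * d) _ unit (fun _ s => Psi h s) tt a b c (MF_Psi gh)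
  (fun _ s => Psi_ge0 h0 s) c0 Hab Hbox.
congr (_ <= _)%E; congr (_%:E); congr (_ * _).
rewrite (eq_bigr (fun _ => al / d%:R)); first by rewrite prodr_const card_ord.
by move=> i _; rewrite /b addrC addKr.
Qed.

End Box.

Section Integ.
Variable R : realType.
Variables m' k : nat.
Local Notation m := m'.+2.
Local Notation d := m'.+1.

Definition Pint (h : ('I_k -> 'I_m -> R) -> R) : \bar R :=
  @paramW_int R m k (fun w => (h w)%:E).

Lemma Pint_bound h B : goodh h -> (forall w, (forall j i, 0 <= w j i) -> 0 <= h w) ->
  0 <= B -> (forall w, (forall j, @simplex R m (w j)) -> h w <= B) ->
  (0 <= Pint h)%E /\ (Pint h <= B%:E)%E.
Proof.
move=> gh h0 B0 hB; rewrite /Pint paramW_Psi; split.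
  by apply: cube_ge0 => s; rewrite lee_fin Psi_ge0.
rewrite -(cube_cst (k * d) B).
apply: (@cube_le R (k * d) _ unit (fun _ s => Psi h s) (fun _ _ => B) tt).
- exact: MF_Psi.
- exact/MF_cst/measurable_cst.
- by move=> _ s; exact: Psi_ge0.
- by [].
- move=> s _; rewrite /Psi; case: ifP => // hC; apply: hB => j.
  exact: (Ws_simplex hC (ltn_ord j)).
Qed.

Lemma Pint_fin h B : goodh h -> (forall w, (forall j i, 0 <= w j i) -> 0 <= h w) ->
  0 <= B -> (forall w, (forall j, @simplex R m (w j)) -> h w <= B) ->
  Pint h \is a fin_num.
Proof.
move=> gh h0 B0 hB; have [H1 H2] := Pint_bound gh h0 B0 hB.
by rewrite ge0_fin_numE // (le_lt_trans H2) // ltry.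
Qed.

Lemma Pint_sum (I : finType) (c : I -> R) (h : I -> ('I_k -> 'I_m -> R) -> R) :
  (forall i, 0 <= c i) -> (forall i, goodh (h i)) ->
  (forall i w, (forall j i, 0 <= w j i) -> 0 <= h i w) ->
  Pint (fun w => \sum_i c i * h i w) = (\sum_i (c i)%:E * Pint (h i))%E.
Proof.
move=> c0 gh h0; rewrite /Pint paramW_Psi.
under eq_bigr do rewrite paramW_Psi.
rewrite -(@cube_sum R (k * d) _ unit I (index_enum I) c (fun i _ s => Psi (h i) s) tt) //.
- apply: cube_ext => s _; congr (_%:E); rewrite /Psi; case: ifP => // _.
  by rewrite big1 // => i _; rewrite mulr0.
- by move=> i; exact: MF_Psi.
- by move=> i _ s; exact: (Psi_ge0 (h0 i)).
Qed.

Lemma Pint_lb h (ws : 'I_k -> 'I_m -> R) (al c : R) : goodh h ->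
  (forall w, (forall j i, 0 <= w j i) -> 0 <= h w) ->
  (forall j, @simplex R m (ws j)) -> 0 < al <= 1 -> 0 <= c ->
  (forall w, (forall j i, (1 - al) * ws j i <= w j i) -> c <= h w) ->
  ((c * (al / d%:R) ^+ (k * d))%:E <= Pint h)%E.
Proof.
move=> gh h0 hws hal c0 hc; rewrite /Pint paramW_Psi.
exact: (Psi_box hws gh h0 hal c0 hc).
Qed.

End Integ.

Section NumL.
Variable R : realType.

Lemma bernoulli (a : R) n : 0 <= a <= 1 -> 1 - n%:R * a <= (1 - a) ^+ n.
Proof.
move=> /andP[a0 a1]; elim: n => [|n IH]; first by rewrite mul0r subr0 expr0.
rewrite exprSr -natr1.
have h : 0 <= 1 - a by lra.
have := ler_wpM2r h IH; move: ((1 - a) ^+ n) => y.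
have := mulr_ge0 (ler0n R n) (mulr_ge0 a0 a0).
nra.
Qed.

Lemma ln_le2sqrt (M : R) : 0 < M -> ln M <= 2 * Num.sqrt M.
Proof.
move=> M0; have s0 : 0 < Num.sqrt M by rewrite sqrtr_gt0.
rewrite -{1}(sqr_sqrtr (ltW M0)) lnXn // mulr2n mulrDl mul1r.
by apply: lerD; apply: ltW; exact: ln_sublinear.
Qed.

End NumL.

Definition etaS (R : realType) (k m' : nat) (n : nat) : R :=
  ((k * m'.+1).+2)%:R * 4 * Num.sqrt (m'.+1%:R / n.+1%:R).

Section Strat.
Variable R : realType.
Variables m' k q : nat.
Local Notation m := m'.+2.
Local Notation d := m'.+1.
Variable v : nat -> 'I_q -> R.
Variable f : ('I_q -> R) -> 'I_k -> R.
Hypothesis hf01 : forall z j, 0 <= f z j <= 1.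
Hypothesis hfs : forall z, \sum_(j < k) f z j = 1.
Variable eps : R.
Hypothesis heps : 0 < eps < 1.
Variable x : market R m.
Hypothesis hx : market_ok x.

Local Notation S := (@CRP_side R m k q v f).
Local Notation Sb := (eps_mod eps S).
Definition ct (t : nat) : R := eps / (2 * (t.+1)%:R ^+ 2).
Definition ce (t : nat) : R := eps / (2 * m%:R * (t.+1)%:R ^+ 2).

Lemma SbE t w i : Sb t w i = (1 - ct t) * (\sum_(j < k) f (v t) j * w j i) + ce t.
Proof. by []. Qed.

Lemma ct01 t : 0 <= ct t <= 1 / 2.
Proof.
rewrite /ct; set u := (t.+1)%:R ^+ 2.
have hu : 1 <= u by rewrite exprn_ege1 // ler1n.
case/andP: heps => e0 e1.
have h2 : 0 < 2 * u by apply: mulr_gt0 => //; lra.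
apply/andP; split; first by rewrite divr_ge0 // ltW.
rewrite ler_pdivrMr //; nra.
Qed.

Lemma ce_ge0 t : 0 <= ce t.
Proof.
case/andP: heps => e0 e1.
by rewrite /ce divr_ge0 ?ltW // !mulr_ge0 // exprn_ge0.
Qed.

Lemma ceE t : ce t = ct t / m%:R.
Proof.
rewrite /ce /ct; have h1 := ler0n R m'; have h2 := ler0n R t.
by field; apply/andP; split; apply/negP => /eqP; lra.
Qed.

Lemma ce_le t : ce t <= ct t.
Proof.
have [c0 _] := andP (ct01 t).
by rewrite ceE ler_pdivrMr ?ltr0n // ler_peMr // ler1n.
Qed.

Definition Wt t (w : 'I_k -> 'I_m -> R) : R := wealth x (at_param Sb w) t.
Definition Ht t i (w : 'I_k -> 'I_m -> R) : R := Sb t w i * Wt t w.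
Definition WS t (w : 'I_k -> 'I_m -> R) : R := wealth x (at_param S w) t.
Definition Bt t : R := \prod_(tau < t) \sum_(i < m) x tau i.
Definition delta t : R := \prod_(tau < t) (1 - ct tau).

Lemma WtE t w : Wt t w = \prod_(tau < t) \sum_(i < m) Sb tau w i * x tau i.
Proof. by []. Qed.

Lemma good_Sb t i : goodh (fun w : 'I_k -> 'I_m -> R => Sb t w i).
Proof.
apply: goodh_add; last exact: goodh_cst.
apply: goodh_mul; first exact: goodh_cst.
by apply: goodh_sum => j; apply: goodh_mul; [exact: goodh_cst|exact: goodh_coord].
Qed.

Lemma good_Wt t : goodh (Wt t).
Proof.
apply: goodh_prod => tau; apply: goodh_sum => i.
by apply: goodh_mul; [exact: good_Sb|exact: goodh_cst].
Qed.

Lemma good_Ht t i : goodh (Ht t i).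
Proof. by apply: goodh_mul; [exact: good_Sb|exact: good_Wt]. Qed.

Lemma Sb_ge0 t i w : (forall j i, 0 <= w j i) -> 0 <= Sb t w i.
Proof.
move=> w0; rewrite SbE addr_ge0 ?ce_ge0 // mulr_ge0 //.
  by have /andP[_ h] := ct01 t; rewrite subr_ge0 (le_trans h) //; lra.
by apply: sumr_ge0 => j _; rewrite mulr_ge0 //; case/andP: (hf01 (v t) j).
Qed.

Lemma Wt_ge0 t w : (forall j i, 0 <= w j i) -> 0 <= Wt t w.
Proof.
move=> w0; rewrite WtE prodr_ge0 // => tau _; apply: sumr_ge0 => i _.
by rewrite mulr_ge0 ?Sb_ge0 // ltW.
Qed.

Lemma Ht_ge0 t i w : (forall j i, 0 <= w j i) -> 0 <= Ht t i w.
Proof. by move=> w0; rewrite /Ht mulr_ge0 ?Sb_ge0 ?Wt_ge0. Qed.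

Lemma Sb_le1 t i w : (forall j, @simplex R m (w j)) -> Sb t w i <= 1.
Proof.
move=> ws; rewrite SbE.
have [c0 c1] := andP (ct01 t); have ce1 := ce_le t.
have hS : \sum_(j < k) f (v t) j * w j i <= 1.
  rewrite -(hfs (v t)); apply: ler_sum => j _.
  have [/(_ i) /andP[_ w1] _] := ws j; have /andP[f0 _] := hf01 (v t) j.
  by rewrite ler_piMr.
have hS0 : 0 <= \sum_(j < k) f (v t) j * w j i.
  apply: sumr_ge0 => j _; have [/(_ i) /andP[w0 _] _] := ws j.
  by have /andP[f0 _] := hf01 (v t) j; rewrite mulr_ge0.
move: (\sum_(j < k) _) hS hS0 => y hS hS0.
have : (1 - ct t) * y <= 1 - ct t by rewrite ler_piMr //; lra.
lra.
Qed.

Lemma Wt_le t w : (forall j, @simplex R m (w j)) -> Wt t w <= Bt t.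
Proof.
move=> ws; rewrite WtE /Bt; apply: ler_prod => tau _; apply/andP; split.
  apply: sumr_ge0 => i _; rewrite mulr_ge0 ?Sb_ge0 ?ltW //.
  by move=> j i'; have [/(_ i') /andP[]] := ws j.
by apply: ler_sum => i _; rewrite ler_piMl ?Sb_le1 ?ltW //.
Qed.

Lemma Ht_le t i w : (forall j, @simplex R m (w j)) -> Ht t i w <= Bt t.
Proof.
move=> ws; rewrite /Ht; apply: (le_trans _ (Wt_le t ws)); rewrite ler_piMl ?Sb_le1 //.
by apply: Wt_ge0 => j i'; have [/(_ i') /andP[]] := ws j.
Qed.

Lemma S_ge0 t (w : 'I_k -> 'I_m -> R) i : (forall j i, 0 <= w j i) -> 0 <= S t w i.
Proof.
move=> w0; apply: sumr_ge0 => j _; rewrite mulr_ge0 //.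
by case/andP: (hf01 (v t) j).
Qed.

Lemma Wt_lb t ws al w : (forall j, @simplex R m (ws j)) -> 0 <= al <= 1 ->
  (forall j i, (1 - al) * ws j i <= w j i) ->
  (1 - al) ^+ t * delta t * WS t ws <= Wt t w.
Proof.
move=> hws /andP[al0 al1] hw.
have ws0 : forall j i, 0 <= ws j i by move=> j i; have [/(_ i) /andP[]] := hws j.
have w0 : forall j i, 0 <= w j i.
  by move=> j i; apply: le_trans (hw j i); rewrite mulr_ge0 // subr_ge0.
have -> : (1 - al) ^+ t = \prod_(tau < t) (1 - al) by rewrite prodr_const card_ord.
rewrite /delta /WS /wealth WtE -!big_split /=.
apply: ler_prod => tau _; apply/andP; split.
  rewrite !mulr_ge0 ?subr_ge0 //; first by case/andP: (ct01 tau) => _ h; lra.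
  by apply: sumr_ge0 => i _; rewrite mulr_ge0 ?S_ge0 // ltW.
rewrite /dotp /at_param !mulr_sumr; apply: ler_sum => i _.
rewrite !mulrA; apply: ler_wpM2r; first exact: ltW.
have [c0 c1] := andP (ct01 tau).
rewrite SbE -mulrA [(1 - al) * _]mulrC -mulrA [_ * (1 - al)]mulrC.
rewrite -[X in X <= _]addr0; apply: lerD; last exact: ce_ge0.
apply: ler_wpM2l; first by lra.
rewrite /CRP_side mulr_sumr; apply: ler_sum => j _.
rewrite mulrCA; apply: ler_wpM2l; first by case/andP: (hf01 (v tau) j).
exact: hw.
Qed.

Lemma WS_gt0 t ws : (forall j, @simplex R m (ws j)) -> 0 < WS t ws.
Proof.
move=> hws; have ws0 : forall j i, 0 <= ws j i by move=> j i; have [/(_ i) /andP[]] := hws j.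
rewrite /WS /wealth; apply: prodr_gt0 => tau _.
have hy : \sum_(i < m) S tau ws i = 1.
  rewrite /CRP_side exchange_big /= -(hfs (v tau)); apply: eq_bigr => j _.
  by rewrite -mulr_sumr; have [_ ->] := hws j; rewrite mulr1.
rewrite lt_def; apply/andP; split; last first.
  by apply: sumr_ge0 => i _; rewrite mulr_ge0 ?S_ge0 // ltW.
apply/negP => /eqP h0.
have := psumr_eq0P (fun i _ => mulr_ge0 (S_ge0 tau i ws0) (ltW (hx tau i))) h0.
move=> hz; move: hy; rewrite big1 => [|i _]; first by move/eqP; rewrite eq_sym oner_eq0.
have := hz i isT; move/eqP; rewrite mulf_eq0 => /orP[/eqP //|].
by rewrite gt_eqF // hx.
Qed.

Lemma Bt_ge0 t : 0 <= Bt t.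
Proof. by apply: prodr_ge0 => tau _; apply: sumr_ge0 => i _; exact: ltW. Qed.

Lemma Wt_fin t : Pint (Wt t) \is a fin_num.
Proof. exact: (Pint_fin (good_Wt t) (@Wt_ge0 t) (Bt_ge0 t) (@Wt_le t)). Qed.

Lemma Ht_fin t i : Pint (Ht t i) \is a fin_num.
Proof. exact: (Pint_fin (good_Ht t i) (@Ht_ge0 t i) (Bt_ge0 t) (@Ht_le t i)). Qed.

Definition Dt t : R := fine (Pint (Wt t)).

Lemma Wt_succ t w : Wt t.+1 w = \sum_(i < m) x t i * Ht t i w.
Proof.
rewrite WtE big_ord_recr /= -WtE mulr_sumr; apply: eq_bigr => i _.
by rewrite /Ht; ring.
Qed.

Lemma Dt_succ t : Dt t.+1 = \sum_(i < m) x t i * fine (Pint (Ht t i)).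
Proof.
rewrite /Dt (_ : Wt t.+1 = fun w => \sum_(i < m) x t i * Ht t i w); last first.
  by apply/funext => w; exact: Wt_succ.
rewrite Pint_sum //; last 3 first.
- by move=> i; exact: ltW.
- by move=> i; exact: good_Ht.
- by move=> i w; exact: Ht_ge0.
rewrite -sum_fine; last by move=> i _; rewrite fin_numM ?Ht_fin.
by apply: eq_bigr => i _; rewrite fineM ?Ht_fin.
Qed.

Lemma delta_gt0 t : 0 < delta t.
Proof.
apply: prodr_gt0 => tau _; have /andP[_ h] := ct01 tau; lra.
Qed.

Definition ws0 : 'I_k -> 'I_m -> R := fun _ i => if i == ord0 then 1 else 0.

Lemma ws0_simplex j : @simplex R m (ws0 j).
Proof.
split.
  by move=> i; rewrite /ws0; case: (i == ord0); rewrite ?lexx ?ler01.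
rewrite (bigD1 ord0) //= /ws0 eqxx big1 ?addr0 // => i /negbTE ->.
by [].
Qed.

Lemma Dt_gt0 t : 0 < Dt t.
Proof.
have hal : 0 < (1 / 2 : R) <= 1 by apply/andP; split; lra.
have hal' : 0 <= (1 / 2 : R) <= 1 by apply/andP; split; lra.
set c := (1 - 1 / 2) ^+ t * delta t * WS t ws0.
have c0 : 0 < c.
  by rewrite /c !mulr_gt0 ?exprn_gt0 ?delta_gt0 ?WS_gt0 //; [lra|exact: ws0_simplex].
have := Pint_lb (good_Wt t) (@Wt_ge0 t) ws0_simplex hal (ltW c0)
  (fun w hw => @Wt_lb t ws0 (1 / 2) w ws0_simplex hal' hw).
rewrite /Dt -(fineK (Wt_fin t)) lee_fin /= => H.
apply: lt_le_trans H; rewrite mulr_gt0 // exprn_gt0 // divr_gt0 // ?ltr0n //; lra.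
Qed.

Lemma V_eq : @paramW_int R m k (fun _ => 1%E) = Pint (Wt 0).
Proof. by rewrite /Pint; congr paramW_int; apply/funext => w; rewrite /Wt /wealth big_ord0. Qed.

Lemma unif_intE h : @unif_int R m k (fun w => (h w)%:E) = (Pint h * ((Dt 0)^-1)%:E)%E.
Proof. by rewrite /unif_int V_eq. Qed.

Lemma univE t i : univ Sb x t i = fine (Pint (Ht t i)) / Dt t.
Proof.
rewrite /univ (unif_intE (Ht t i)) (unif_intE (Wt t)).
rewrite !fineM ?Ht_fin ?Wt_fin //= -/(Dt t).
have h0 := Dt_gt0 0; have ht := Dt_gt0 t.
by field; rewrite !gt_eqF.
Qed.

Lemma wealthU n : wealth x (univ Sb x) n = Dt n / Dt 0.
Proof.
elim: n => [|n IH].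
  by rewrite /wealth big_ord0 divff // gt_eqF // Dt_gt0.
rewrite /wealth big_ord_recr /= -/(wealth x (univ Sb x) n) IH.
rewrite /dotp (eq_bigr (fun i => x n i * fine (Pint (Ht n i)) / Dt n)); last first.
  by move=> i _; rewrite univE; ring.
rewrite -mulr_suml -Dt_succ.
have h0 := Dt_gt0 0; have ht := Dt_gt0 n.
by field; rewrite !gt_eqF.
Qed.

Lemma Dt0_le1 : Dt 0 <= 1.
Proof.
have [H1 H2] := Pint_bound (good_Wt 0) (@Wt_ge0 0) (Bt_ge0 0) (@Wt_le 0).
by rewrite /Dt -lee_fin fineK ?Wt_fin // (le_trans H2) // /Bt big_ord0.
Qed.

Lemma delta_lb n : (n.+1%:R)^-1 <= delta n.
Proof.
elim: n => [|n IH]; first by rewrite /delta big_ord0 invr1.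
rewrite /delta big_ord_recr /= -/(delta n).
set u : R := n.+1%:R.
have u1 : 1 <= u by rewrite ler1n.
have hc : ct n * (u + 1) <= 1.
  have [c0 _] := andP (ct01 n).
  have hct : ct n * (2 * u ^+ 2) = eps.
    rewrite /ct /u; have h1 := ler0n R n.
    by field; apply/negP => /eqP; lra.
  apply: (@le_trans _ _ (ct n * (2 * u ^+ 2))).
    by rewrite ler_wpM2l //; nra.
  by rewrite hct; case/andP: heps => _ /ltW.
have hd0 : 0 <= delta n by exact/ltW/delta_gt0.
have hnat : n.+2%:R = u + 1 by rewrite /u -natr1.
rewrite hnat.
have hp : 0 < u by lra.
have h1c : 0 <= 1 - ct n by have [_ h] := andP (ct01 n); lra.
apply: (@le_trans _ _ (u^-1 * (1 - ct n))); last exact: ler_wpM2r.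
rewrite -div1r ler_pdivrMr; last by lra.
rewrite -mulrA; apply: (@le_trans _ _ (u^-1 * u)); first by rewrite mulVf // gt_eqF.
apply: ler_wpM2l; first by rewrite invr_ge0; lra.
nra.
Qed.

Lemma growth_lb n ws : (0 < n)%N -> (forall j, @simplex R m (ws j)) ->
  growth x (at_param S ws) n <= growth x (univ Sb x) n + etaS R k m' n.
Proof.
move=> n0 hws.
set N : R := n%:R.
have N1 : 1 <= N by rewrite /N ler1n.
have hN : n.+1%:R = N + 1 :> R by rewrite /N -natr1.
set al : R := (N + 1)^-1.
have Np : 0 < N + 1 by lra.
have al0 : 0 < al by rewrite invr_gt0.
have alN : al * (N + 1) = 1 by rewrite mulVf // gt_eqF.
have al1 : al <= 1 by nra.
have hal : 0 < al <= 1 by rewrite al0 al1.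
have hal' : 0 <= al <= 1 by rewrite (ltW al0) al1.
set WSn := WS n ws.
have WS0 : 0 < WSn := WS_gt0 n hws.
set c := (1 - al) ^+ n * delta n * WSn.
have c0 : 0 <= c.
  by rewrite /c !mulr_ge0 ?exprn_ge0 ?(ltW (delta_gt0 n)) ?(ltW WS0) //; lra.
have HL : c * (al / d%:R) ^+ (k * d) <= Dt n.
  have := Pint_lb (good_Wt n) (@Wt_ge0 n) hws hal c0 (fun w hw => @Wt_lb n ws al w hws hal' hw).
  by rewrite /Dt -(fineK (Wt_fin n)) lee_fin.
have HU : Dt n <= wealth x (univ Sb x) n.
  rewrite wealthU ler_pdivlMr ?Dt_gt0 //; apply: ler_piMr; first exact/ltW/Dt_gt0.
  exact: Dt0_le1.
set M : R := d%:R * (N + 1).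
have d1 : 1 <= d%:R :> R by rewrite ler1n.
have M1 : N + 1 <= M by rewrite /M ler_peMl //; lra.
have Mp : 0 < M by lra.
set Mi := M^-1.
have Mi0 : 0 <= Mi by rewrite invr_ge0 ltW.
have Mi_al : al / d%:R = Mi by rewrite /Mi /M /al invfM mulrC.
have alM : Mi <= al by rewrite /Mi /al lef_pV2 ?posrE.
have B1 : Mi <= (1 - al) ^+ n.
  apply: le_trans alM _; apply: le_trans (bernoulli n hal').
  rewrite -/N; nra.
have B2 : Mi <= delta n by apply: le_trans alM _; rewrite /al -hN; exact: delta_lb.
set e := (k * d).+2.
have HL2 : WSn * Mi ^+ e <= c * (al / d%:R) ^+ (k * d).
  rewrite Mi_al /c /e !exprS.
  have -> : WSn * (Mi * (Mi * Mi ^+ (k * d))) = Mi * Mi * WSn * Mi ^+ (k * d) by ring.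
  apply: ler_wpM2r; first exact: exprn_ge0.
  apply: ler_wpM2r; first exact: ltW.
  by apply: ler_pM.
have Hw := le_trans HL2 (le_trans HL HU).
have Pw : 0 < WSn * Mi ^+ e by rewrite mulr_gt0 // exprn_gt0 // invr_gt0.
have H1 : ln (WSn * Mi ^+ e) <= ln (wealth x (univ Sb x) n).
  by rewrite ler_ln ?posrE // (lt_le_trans Pw).
have H2 : ln (WSn * Mi ^+ e) = ln WSn - e%:R * ln M.
  rewrite lnM ?posrE ?exprn_gt0 ?invr_gt0 // lnXn ?invr_gt0 // /Mi lnV ?posrE //.
  by rewrite -mulr_natr; ring.
set sq := Num.sqrt (d%:R / (N + 1)).
have sq0 : 0 <= sq by exact: sqrtr_ge0.
have HM : Num.sqrt M = sq * (N + 1).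
  have -> : M = d%:R / (N + 1) * (N + 1) ^+ 2 by rewrite /M; field; rewrite gt_eqF.
  by rewrite sqrtrM ?divr_ge0 ?ltW // ?ler0n // sqrtr_sqr ger0_norm // ltW.
have H3 : e%:R * ln M <= etaS R k m' n * N.
  have := ln_le2sqrt Mp; rewrite HM => hl.
  rewrite /etaS hN -/sq -/e.
  have e0 : 0 <= e%:R :> R by exact: ler0n.
  have h4 := ler_wpM2l e0 hl.
  have h5 : 0 <= e%:R * (sq * (N - 1)) by rewrite !mulr_ge0 // subr_ge0.
  move: (e%:R) (ln M) e0 h4 h5 => E L *; nra.
rewrite /growth -/N -/(WS n ws) -/WSn ler_pdivrMr; last by lra.
rewrite mulrDl divfK; last by rewrite gt_eqF //; lra.
lra.
Qed.

End Strat.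

Import numFieldNormedType.Exports.

Lemma eta_cvg (R : realType) k m' : etaS R k m' @ \oo --> 0.
Proof.
rewrite /etaS.
have h1 : (fun n : nat => (m'.+1%:R : R) * harmonic n) @ \oo --> (m'.+1%:R : R) * 0.
  apply: cvgMr; exact: cvg_harmonic.
rewrite mulr0 in h1.
have h2 : (Num.sqrt \o (fun n : nat => (m'.+1%:R : R) * harmonic n)) x @[x --> \oo] --> Num.sqrt 0.
  by apply: continuous_cvg => //; exact: sqrt_continuous.
rewrite sqrtr0 in h2.
have h3 : ((k * m'.+1).+2%:R * 4 * (Num.sqrt \o (fun n : nat => (m'.+1%:R : R) * harmonic n)) x) @[x --> \oo] --> ((k * m'.+1).+2%:R * 4 * 0 : R).
  by apply: cvgMr.
rewrite mulr0 in h3.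
apply: cvg_trans h3; apply: near_eq_cvg; near=> n => /=.
by rewrite /harmonic /=.
Unshelve. all: by end_near.
Qed.

Theorem side_univ (R : realType) m' k q (v : nat -> 'I_q -> R) (f : ('I_q -> R) -> 'I_k -> R) :
  (forall z j, 0 <= f z j <= 1) -> (forall z, \sum_(j < k) f z j = 1) ->
  universalizable (@CRP_side R m'.+2 k q v f).
Proof.
move=> hf01 hfs eps heps; exists (etaS R k m'); split; first exact: eta_cvg.
move=> x hx n hn.
rewrite leeBlDr //; apply: ge_ereal_sup => y [w hw <-].
rewrite -EFinD lee_fin.
exact: (growth_lb v hf01 hfs heps hx hn hw).
Qed.

Unset Implicit Arguments.

Theorem mainTheorem8 (R : realType) (m : nat) (hm : (2 <= m)%N) :
  universalizable (@CRP R m) /\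
  (forall (k q : nat), (1 <= k)%N ->
   forall (v : nat -> 'I_q -> R) (f : ('I_q -> R) -> 'I_k -> R),
     (forall z j, 0 <= f z j <= 1) ->
     (forall z, \sum_(j < k) f z j = 1) ->
     universalizable (@CRP_side R m k q v f)).
Proof.
case: m hm => [|[|m']] // _.
split; last by move=> k q _ v f h1 h2; exact: side_univ.
have -> : @CRP R m'.+2 = @CRP_side R m'.+2 1 0 (fun _ _ => 0) (fun _ _ => 1).
  apply/funext => t; apply/funext => w; apply/funext => i.
  by rewrite /CRP /CRP_side big_ord1 mul1r.
apply: side_univ => z.
  by move=> j; rewrite ler01 lexx.
by rewrite big_ord1.
Qed.
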